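(* Let $(x_n)_{n \in \mathbb{N}}$ be a sequence in $[0,1)$ with the following property: there exist $s \in \mathbb{N}$ and positive real numbers $K$ and $\gamma$ such that for infinitely many $N$ the point set $x_1, \ldots, x_N$ has a subset $x_{j_1}, \ldots, x_{j_M}$ with $M \geq \gamma N$ elements which is contained in some finite set of points of $[0,1)$ of cardinality at most $KN$ having at most $s$ different distances between neighbouring elements (gaps). Then $(x_n)_{n \in \mathbb{N}}$ does not have Poissonian pair correlations.
   Context: For real $x$, $\|x\|$ denotes the distance from $x$ to the nearest integer. A sequence $(x_n)_{n\in\mathbb{N}}$ in $[0,1)$ has Poissonian pair correlations if for every $s \geq 0$, $$F_N(s) := \frac{1}{N}\#\left\{1 \leq l \neq m \leq N : \|x_l - x_m\| \leq \frac{s}{N}\right\} \to 2s \quad (N\to\infty).$$ For a finite point set in $[0,1)$, the gaps are the distances between neighbouring elements, i.e. between consecutive points when the set is arranged in increasing order. *)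

(* Defs.v *)
From HB Require Import structures.
From mathcomp Require Import all_boot all_order all_algebra.
From mathcomp Require Import all_classical all_reals topology normedtype sequences.
Set Implicit Arguments. Unset Strict Implicit. Unset Printing Implicit Defensive.
Import Order.TTheory GRing.Theory Num.Theory numFieldNormedType.Exports.
Local Open Scope ring_scope.
Local Open Scope classical_set_scope.
Local Open Scope ring_scope.

Definition dist_int {R : realType} (y : R) : R :=
  Num.min (y - (Num.floor y)%:~R) ((Num.ceil y)%:~R - y).

(* F_N(s) = (1/N) #{ 1 <= l <> m <= N : ||x_l - x_m|| <= s/N };
   the sequence is x_1, x_2, ... and index i : 'I_N stands for i+1. *)
Definition pair_corr {R : realType} (x : nat -> R) (s : R) (N : nat) : R :=
  (#|[set p : 'I_N * 'I_N |
       (p.1 != p.2) && (dist_int (x p.1.+1 - x p.2.+1) <= s / N%:R)]|)%:R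
  / N%:R.

Definition poissonian_pc {R : realType} (x : nat -> R) : Prop :=
  forall s : R, 0 <= s -> (pair_corr x s) @ \oo --> (2 * s : R)%R.

Definition is_gap {R : realType} (P : seq R) (d : R) : Prop :=
  exists p q, [/\ p \in P, q \in P, p < q, d = q - p &
                  forall r, r \in P -> ~ (p < r /\ r < q)].

Definition at_most_gaps {R : realType} (P : seq R) (s : nat) : Prop :=
  exists G : seq R, (size G <= s)%N /\ forall d, is_gap P d -> d \in G.

(* Main.v *)
Require Import Defs.
From HB Require Import structures.
From mathcomp Require Import zify ring lra.
From mathcomp Require Import all_boot all_order all_algebra.
From mathcomp Require Import all_classical all_reals topology normedtype sequences.
Import Order.TTheory GRing.Theory Num.Theory numFieldNormedType.Exports.
Local Open Scope ring_scope.

Section Gaps.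
Context {R : realType}.

Fixpoint sums (G : seq R) (h : nat) : seq R :=
  if h is h'.+1 then sums G h' ++ [seq g + d | g <- G, d <- sums G h']
  else [:: 0].

Lemma size_sums G h : size (sums G h) = ((size G).+1 ^ h)%N.
Proof.
elim: h => [//|h IH] /=.
by rewrite size_cat size_allpairs IH expnS mulSn.
Qed.

Lemma sums_S G h d : d \in sums G h -> d \in sums G h.+1.
Proof. by move=> hd /=; rewrite mem_cat hd. Qed.

Lemma sums0 G h : 0 \in sums G h.
Proof. elim: h => [|h IH]; first by rewrite inE. exact: sums_S. Qed.

Lemma min_exists (l : seq R) : l != [::] ->
  exists2 c, c \in l & forall p, p \in l -> c <= p.
Proof.
elim: l => [//|y l IH] _.
case: (eqVneq l [::]) => [->|hl].
  by exists y; rewrite ?inE // => p; rewrite inE => /eqP ->.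
have [c hc hmin] := IH hl.
case: (leP y c) => hyc.
  exists y; first by rewrite inE eqxx.
  move=> p; rewrite inE => /orP [/eqP ->//|hp].
  exact: le_trans hyc (hmin p hp).
exists c; first by rewrite inE hc orbT.
move=> p; rewrite inE => /orP [/eqP ->|hp]; last exact: hmin.
exact: ltW.
Qed.

Lemma count_split (P : seq R) (a c b : R) : a <= c -> c <= b ->
  count (fun p => (a <= p) && (p <= b)) P =
  addn (count (fun p => (c <= p) && (p <= b)) P) (count (fun p => (a <= p) && (p < c)) P).
Proof.
move=> hac hcb; elim: P => [//|p P IH] /=.
rewrite IH; case: (leP c p) => hcp /=.
  rewrite (le_trans hac hcp) /=.
  by case: (p <= b); rewrite /= ?addn0 ?add0n; lia.
rewrite (le_trans (ltW hcp) hcb) andbT /=.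
by rewrite add0n; lia.
Qed.

Lemma gap_sum (P G : seq R) (hG : forall d, is_gap P d -> d \in G) h :
  forall a b, a \in P -> b \in P -> a <= b ->
  leq (count (fun p => (a <= p) && (p <= b)) P) h.+1 ->
  b - a \in sums G h.
Proof.
elim: h => [|h IH] a b ha hb hab hcnt.
- case: (eqVneq a b) => [->|hne]; first by rewrite subrr inE.
  have hlt : a < b by rewrite lt_neqAle hne hab.
  exfalso.
  move: hcnt; rewrite (@count_split P a b b (ltW hlt) (lexx b)) => hcnt.
  have h1 : leq 1 (count (fun p => (b <= p) && (p <= b)) P).
    by rewrite -has_count; apply/hasP; exists b => //; rewrite lexx.
  have h2 : leq 1 (count (fun p => (a <= p) && (p < b)) P).
    by rewrite -has_count; apply/hasP; exists a => //; rewrite lexx.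
  move: hcnt h1 h2; lia.
- case: (eqVneq a b) => [->|hne]; first by rewrite subrr sums0.
  have hlt : a < b by rewrite lt_neqAle hne hab.
  set l := [seq p <- P | (a < p) && (p <= b)].
  have hl : l != [::].
    apply/eqP => h0; have : b \in l by rewrite mem_filter hlt lexx hb.
    by rewrite h0.
  have [c hc hmin] := @min_exists l hl.
  move: hc; rewrite mem_filter => /andP [/andP [hac hcb] hcP].
  have hgap : is_gap P (c - a).
    exists a, c; split => // r hr [har hrc].
    have : r \in l by rewrite mem_filter har (le_trans (ltW hrc) hcb) hr.
    by move/hmin; rewrite leNgt hrc.
  have hcG := hG _ hgap.
  have hcnt' : leq (count (fun p => (c <= p) && (p <= b)) P) h.+1.
    move: hcnt; rewrite (@count_split P a c b (ltW hac) hcb) => hcnt.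
    have h2 : leq 1 (count (fun p => (a <= p) && (p < c)) P).
      by rewrite -has_count; apply/hasP; exists a => //; rewrite lexx.
    move: hcnt h2; lia.
  have := IH c b hcP hb hcb hcnt'.
  have -> : b - a = (c - a) + (b - c) by ring.
  move=> hbc /=; rewrite mem_cat; apply/orP; right.
  exact: allpairs_f.
Qed.


Lemma count_rank (P : seq R) (a b : R) : a <= b ->
  addn (count (fun p => (a <= p) && (p <= b)) P) (count (fun p => p < a) P) =
  addn (count (fun p => p < b) P) (count (pred1 b) P).
Proof.
move=> hab; elim: P => [//|p P IH] /=.
suff : addn (nat_of_bool ((a <= p) && (p <= b))) (nat_of_bool (p < a)) =
       addn (nat_of_bool (p < b)) (nat_of_bool (p == b)).
  by move=> h0; rewrite addnACA h0 IH addnACA.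
case: (ltP p a) => hpa.
  have hpb : p < b by exact: lt_le_trans hpa hab.
  by rewrite hpb (lt_eqF hpb) ?(lt_geF hpa).
case: (ltP p b) => hpb.
  by rewrite (ltW hpb) (lt_eqF hpb).
case: (eqVneq p b) => [->|hne]; first by rewrite lexx.
have : b < p by rewrite lt_neqAle eq_sym hne hpb.
by move=> hbp; rewrite leNgt hbp.
Qed.

Definition rank (P : seq R) (y : R) : nat := count (fun p => p < y) P.
Definition wt (P : seq R) (c : R) (y : R) : R := y + (rank P y)%:R / c.

Lemma rank_mono P a b : a <= b -> (rank P a <= rank P b)%N.
Proof.
move=> hab; apply: sub_count => p /= hp; exact: lt_le_trans hp hab.
Qed.

Lemma close_pair (P G : seq R) (hG : forall d, is_gap P d -> d \in G)
  (huniq : uniq P) (Kr Nr T : R) (H : nat) (hK : 0 < Kr) (hN : 0 < Nr) (hT : 0 < T)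
  (hH : T * Kr <= H%:R) a b (ha : a \in P) (hb : b \in P)
  (ha0 : 0 <= a) (hb0 : 0 <= b)
  (hk : Num.truncn (wt P (Kr * Nr) a * Nr / T) = Num.truncn (wt P (Kr * Nr) b * Nr / T)) :
  `|a - b| \in sums G H /\ `|a - b| * Nr < T.
Proof.
wlog hab : a b ha hb ha0 hb0 hk / a <= b.
  move=> hw; case: (leP a b) => h; first exact: hw.
  rewrite distrC; apply: hw => //; exact: ltW.
rewrite distrC ger0_norm ?subr_ge0 //.
have hr := @rank_mono P a b hab.
set ra := rank P a in hr *; set rb := rank P b in hr *.
have hKN : 0 < Kr * Nr by rewrite mulr_gt0.
have hwa : 0 <= wt P (Kr * Nr) a * Nr / T.
  apply: divr_ge0; last exact: ltW.
  apply: mulr_ge0; last exact: ltW.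
  by apply: addr_ge0 => //; apply: divr_ge0; [exact: ler0n | exact: ltW].
have hwb : 0 <= wt P (Kr * Nr) b * Nr / T.
  apply: divr_ge0; last exact: ltW.
  apply: mulr_ge0; last exact: ltW.
  by apply: addr_ge0 => //; apply: divr_ge0; [exact: ler0n | exact: ltW].
have [ha1 ha2] := andP (truncn_itv hwa).
have [hb1 hb2] := andP (truncn_itv hwb).
rewrite hk in ha1 ha2.
have hd : wt P (Kr * Nr) b * Nr / T - wt P (Kr * Nr) a * Nr / T < 1.
  move: hb2 ha1; set u := (Num.truncn _)%:R; rewrite -natr1; lra.
have hd2 : (b - a) + (rb%:R - ra%:R) / (Kr * Nr) < T / Nr.
  set X := wt P (Kr * Nr) b; set Y := wt P (Kr * Nr) a.
  have -> : b - a + (rb%:R - ra%:R) / (Kr * Nr) = X - Y by rewrite /X /Y /wt; ring.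
  have e : X * Nr / T - Y * Nr / T = (X - Y) * Nr / T by ring.
  move: hd; rewrite e ltr_pdivrMr // mul1r => hd.
  by rewrite ltr_pdivlMr.
have hrr : 0 <= (rb%:R - ra%:R) / (Kr * Nr) :> R.
  by apply: divr_ge0; [rewrite subr_ge0 ler_nat | exact: ltW].
have hba : 0 <= b - a by rewrite subr_ge0.
split; last first.
  by rewrite -ltr_pdivlMr //; lra.
have hrT : (rb%:R - ra%:R) < T * Kr :> R.
  have : (rb%:R - ra%:R) / (Kr * Nr) < T / Nr by lra.
  rewrite ltr_pdivrMr // => h1.
  have e : T / Nr * (Kr * Nr) = T * Kr by field; rewrite gt_eqF.
  by rewrite e in h1.
have hrH : (rb - ra < H)%N.
  by rewrite -(ltr_nat R) natrB //; exact: lt_le_trans hrT hH.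
have hc := @count_rank P a b hab.
rewrite count_uniq_mem // hb in hc.
apply: (@gap_sum P G hG H a b ha hb hab).
move: hc hrH hr; rewrite /ra /rb /rank.
move: (count _ P) (count (<%R^~ a) P) (count (<%R^~ b) P) => u v w.
clear; lia.
Qed.



Lemma sum_ind_key (Q a : nat) (ha : (a < Q)%N) (f : nat -> R) :
  \sum_(k < Q) ((a == k)%:R * f k) = f a.
Proof.
rewrite (bigD1 (Ordinal ha)) //= eqxx mul1r big1 ?addr0 // => k hk.
have : a != k by apply: contra hk => /eqP hak; apply/eqP/val_inj; rewrite /= hak.
by move/negbTE => ->; rewrite mul0r.
Qed.

Lemma card_sum (I : finType) (A : {set I}) :
  (#|A|%:R : R) = \sum_i ((i \in A)%:R : R).
Proof.
rewrite -sum1_card natr_sum big_mkcond /=; apply: eq_bigr => i _.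
by case: (i \in A).
Qed.

Lemma keysum (N Q : nat) (J : {set 'I_N}) (key : 'I_N -> nat)
  (hkey : forall i, i \in J -> (key i < Q)%N) (t : R) :
  2 * t * #|J|%:R - t ^+ 2 * Q%:R <=
  \sum_(p : 'I_N * 'I_N) (((p.1 \in J) && (p.2 \in J) && (key p.1 == key p.2))%:R : R).
Proof.
pose m (k : nat) : R := \sum_i (((i \in J) && (key i == k))%:R : R).
have h1 : \sum_(k < Q) m k = #|J|%:R.
  rewrite card_sum /m exchange_big /=; apply: eq_bigr => i _.
  case hi: (i \in J) => /=; last by rewrite big1.
  rewrite -[RHS](@sum_ind_key Q (key i) (hkey i hi) (fun _ => 1)).
  by apply: eq_bigr => k _; rewrite mulr1.
have h2 : \sum_(p : 'I_N * 'I_N) (((p.1 \in J) && (p.2 \in J) && (key p.1 == key p.2))%:R : R)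
          = \sum_(k < Q) m k * m k.
  under [RHS]eq_bigr do rewrite /m big_distrlr /=.
  rewrite exchange_big /= -(pair_bigA _ (fun i j => (((i \in J) && (j \in J) && (key i == key j))%:R : R))) /=.
  apply: eq_bigr => i _.
  rewrite exchange_big /=; apply: eq_bigr => j _.
  case hi: (i \in J) => /=; last by rewrite big1 // => k _; rewrite mul0r.
  case hj: (j \in J) => /=; last by rewrite big1 // => k _; rewrite mulr0.
  have := @sum_ind_key Q (key i) (hkey i hi) (fun k => ((key j == k)%:R : R)).
  by rewrite eq_sym => ->.
rewrite h2 -h1.
have -> : t ^+ 2 * Q%:R = \sum_(k < Q) t ^+ 2.
  by rewrite sumr_const card_ord mulr_natr.
rewrite mulr_sumr -sumrB; apply: ler_sum => k _.
have := sqr_ge0 (m k - t); rewrite expr2; nra.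
Qed.

Lemma dist_int_ge0 (y : R) : 0 <= dist_int y.
Proof.
rewrite /dist_int le_min subr_ge0 floor_le /= subr_ge0; exact: ceil_ge.
Qed.

Lemma dist_int_small (y : R) : `|y| <= 1/2 -> dist_int y = `|y|.
Proof.
move=> hy; rewrite /dist_int.
case: (ltgtP y 0) => hy0.
- have hf : Num.floor y = -1.
    apply: floor_def; rewrite addNr /=; apply/andP; split; last by [].
    move: hy; rewrite ltr0_norm // => hy; rewrite /=; lra.
  have hc : Num.ceil y = 0.
    apply: ceil_def; rewrite sub0r /=; apply/andP; split; last exact: ltW.
    move: hy; rewrite ltr0_norm // => hy; lra.
  rewrite hf hc ltr0_norm //= min_r //; move: hy; rewrite ltr0_norm // => hy; lra.
- have hf : Num.floor y = 0.
    apply: floor_def; rewrite add0r /=; apply/andP; split; first exact: ltW.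
    move: hy; rewrite gtr0_norm // => hy; lra.
  have hc : Num.ceil y = 1.
    apply: ceil_def; rewrite subrr /=; apply/andP; split; first by [].
    move: hy; rewrite gtr0_norm // => hy; lra.
  rewrite hf hc gtr0_norm //= min_l //; move: hy; rewrite gtr0_norm // => hy; lra.
- by rewrite hy0 floor0 ceil0 /= subrr normr0 min_l.
Qed.

Lemma mem_cset (T : finType) (b : T -> bool) x : (x \in [set p | b p]%classic) = b x.
Proof. by apply/idP/idP; rewrite in_setE. Qed.

Lemma card_csum (I : finType) (b : I -> bool) :
  (#|[set p | b p]%classic|%:R : R) = \sum_p ((b p)%:R : R).
Proof.
rewrite -sum1_card natr_sum big_mkcond /=; apply: eq_bigr => p _.
by rewrite mem_cset; case: (b p).
Qed.

Definition ind (x : nat -> R) {N : nat} (u : R) (p : 'I_N * 'I_N) : R :=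
  ((p.1 != p.2) && (dist_int (x p.1.+1 - x p.2.+1) <= u / N%:R))%:R.

Lemma pair_corrE (x : nat -> R) (u : R) (N : nat) :
  pair_corr x u N = (\sum_(p : 'I_N * 'I_N) ind x u p) / N%:R.
Proof. by rewrite /pair_corr card_csum. Qed.

Lemma pair_corr_neg (x : nat -> R) (u : R) (N : nat) : u < 0 -> pair_corr x u N = 0.
Proof.
move=> hu; rewrite pair_corrE.
case: N => [|N]; first by rewrite invr0 mulr0.
rewrite big1 ?mul0r // => p _; rewrite /ind.
suff -> : (dist_int (x p.1.+1 - x p.2.+1) <= u / N.+1%:R) = false by rewrite andbF.
apply/negbTE; rewrite -ltNge.
apply: lt_le_trans (dist_int_ge0 _).
by rewrite pmulr_llt0 // invr_gt0 ltr0Sn.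
Qed.

Lemma eventually_diff (x : nat -> R) (hppc : poissonian_pc x) (eta beta : R)
  (heta : 0 < eta) (hb : 2 * eta < beta) (k : nat) :
  exists N1, forall N, (N1 <= N)%N ->
    pair_corr x (k%:R * eta) N - pair_corr x (k%:R * eta - eta) N < beta.
Proof.
case: k => [|k].
  have := hppc 0 (lexx 0); rewrite mulr0 => hc.
  have hb0 : 0 < beta by apply: lt_trans hb; rewrite mulr_gt0.
  have := cvgr_lt _ hc beta hb0 => -[N1 _ hN1]; exists N1 => N hN.
  have -> : pair_corr x (0%:R * eta - eta) N = 0 by apply: pair_corr_neg; rewrite mul0r sub0r oppr_lt0.
  by rewrite subr0 mul0r; apply: hN1.
have h1 := hppc (k.+1%:R * eta) (mulr_ge0 (ler0n _ _) (ltW heta)).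
have h2 := hppc (k.+1%:R * eta - eta) _.
have hk : 0 <= k.+1%:R * eta - eta.
  have h1k : (1:R) <= k.+1%:R by rewrite ler1n.
  nra.
have := cvgB h1 (h2 hk).
have -> : 2 * (k.+1%:R * eta) - 2 * (k.+1%:R * eta - eta) = 2 * eta by ring.
move=> hc; have := cvgr_lt _ (hc _) _ hb => -[N1 _ hN1].
by exists N1 => N hN; apply: hN1.
Qed.

Definition kf (v : R) : nat :=
  if v == (Num.truncn v)%:R then Num.truncn v else (Num.truncn v).+1.

Lemma kf_spec v : 0 <= v -> (kf v)%:R - 1 < v <= (kf v)%:R.
Proof.
move=> hv; have /andP [h1 h2] := truncn_itv hv.
rewrite /kf; case: eqP => e.
  by rewrite -e lexx andbT; lra.
rewrite -natr1; apply/andP; split; last by rewrite natr1 ltW.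
have : (Num.truncn v)%:R < v by rewrite lt_neqAle h1 andbT; apply/eqP => h; apply: e.
lra.
Qed.

Lemma kf_le v K0 : 0 <= v -> v < K0%:R -> (kf v <= K0)%N.
Proof.
move=> hv hK; have : (Num.truncn v < K0)%N by rewrite truncn_lt_nat.
by rewrite /kf; case: eqP => _ //; move/ltnW.
Qed.

Lemma eventually_all (P : nat -> nat -> Prop) :
  (forall k, exists N1, forall N, (N1 <= N)%N -> P k N) ->
  forall K0, exists N1, forall N, (N1 <= N)%N -> forall k, (k <= K0)%N -> P k N.
Proof.
move=> hP; elim => [|K0 [N1 IH]].
  have [N1 h] := hP 0%N; exists N1 => N hN k; rewrite leqn0 => /eqP ->; exact: h.
have [N2 h] := hP K0.+1; exists (maxn N1 N2) => N hN k hk.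
rewrite geq_max in hN; case/andP: hN => hN1 hN2.
case: (ltngtP k K0.+1) => hk'.
- by apply: IH.
- by move: hk; rewrite leqNgt hk'.
- by rewrite hk'; apply: h.
Qed.

Lemma sum_seq_le (L : seq R) (f : R -> R) (c : R) :
  (forall d, d \in L -> f d <= c) -> \sum_(d <- L) f d <= (size L)%:R * c.
Proof.
elim: L => [|d L IH] h; first by rewrite big_nil mul0r.
rewrite big_cons /= -natr1 mulrDl mul1r addrC.
apply: lerD; first by apply: IH => e he; apply: h; rewrite inE he orbT.
by apply: h; rewrite inE eqxx.
Qed.

Lemma ind_mono (x : nat -> R) (N : nat) (u v : R) (p : 'I_N * 'I_N) :
  u <= v -> ind x u p <= ind x v p.
Proof.
move=> huv; rewrite /ind; case: (p.1 != p.2) => //=.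
case h: (dist_int _ <= u / N%:R) => /=.
  suff -> : dist_int (x p.1.+1 - x p.2.+1) <= v / N%:R by [].
  apply: le_trans h _; apply: ler_wpM2r => //; rewrite invr_ge0 ler0n //.
exact: ler0n.
Qed.

Lemma ind_ge0 (x : nat -> R) (N : nat) (u : R) (p : 'I_N * 'I_N) : 0 <= ind x u p.
Proof. by rewrite /ind ler0n. Qed.
End Gaps.

Theorem theorem1 (R : realType) (x : nat -> R)
  (hx : forall n : nat, (1 <= n)%N -> 0 <= x n /\ x n < 1)
  (hyp : exists (s : nat) (K gamma : R), 0 < K /\ 0 < gamma /\
     forall N0 : nat, exists N : nat, (N0 <= N)%N /\
       exists (J : {set 'I_N}) (P : seq R),
         gamma * N%:R <= (#|J|)%:R /\
         [/\ uniq P,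
             (size P)%:R <= K * N%:R,
             (forall p, p \in P -> 0 <= p /\ p < 1),
             (forall j : 'I_N, j \in J -> x j.+1 \in P) &
             at_most_gaps P s]) :
  ~ poissonian_pc x.
Proof.
move=> hppc.
case: hyp => s [K [gam [hK [hg hyp]]]].
set t : R := 2 / gam + 1.
have ht1 : 1 <= t by rewrite /t lerDr divr_ge0 // ltW.
set T : R := t ^+ 2.
have hT : 0 < T by rewrite /T exprn_gt0 //; lra.
set H : nat := (Num.truncn (T * K)).+1.
have hH : T * K <= H%:R by apply: ltW; exact: truncnS_gt.
set C : nat := (s.+1 ^ H)%N.
have hC : (0 < C)%N by rewrite expn_gt0.
have hCr : (0 : R) < C%:R by rewrite ltr0n.
set beta : R := (C%:R * 2)^-1.
have hbeta : 0 < beta by rewrite /beta invr_gt0; lra.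
set eta : R := beta / 4.
have heta : 0 < eta by rewrite /eta; lra.
have hb : 2 * eta < beta by rewrite /eta; lra.
set K0 : nat := (Num.truncn (T / eta)).+1.
have hK0 : T / eta < K0%:R by exact: truncnS_gt.
have [N1 hN1] := eventually_all _ (eventually_diff _ hppc _ _ heta hb) K0.
set N0 := maxn N1 (Num.truncn (2 * T)).+1.
have [N [hN0 [J [P [hJ [huniq hPsize hP01 hJP hgaps]]]]]] := hyp N0.
rewrite geq_max in hN0; case/andP: hN0 => hNN1 hNT'.
set Nr : R := N%:R.
have hNT : 2 * T < Nr.
  apply: lt_le_trans (truncnS_gt _) _; rewrite /Nr ler_nat; exact: hNT'.
have hNr : 0 < Nr by lra.
case: hgaps => G [hGs hG].
have hKN : 0 < K * Nr by rewrite mulr_gt0.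
pose key (i : 'I_N) : nat := Num.truncn (wt P (K * Nr) (x i.+1) * Nr / T).
set Q : nat := (Num.truncn (2 * Nr / T)).+1.
have hw : forall i : 'I_N, i \in J ->
    0 <= wt P (K * Nr) (x i.+1) * Nr / T < 2 * Nr / T.
  move=> i hi; have [h0 h1] := hP01 _ (hJP i hi).
  have hr : (rank P (x i.+1))%:R <= K * Nr.
    apply: le_trans hPsize; rewrite ler_nat; exact: count_size.
  have hr0 : 0 <= (rank P (x i.+1))%:R / (K * Nr) <= 1.
    apply/andP; split; first by apply: divr_ge0; [exact: ler0n | exact: ltW].
    by rewrite ler_pdivrMr // mul1r.
  rewrite /wt; apply/andP; split.
    by apply: divr_ge0; [apply: mulr_ge0; [apply: addr_ge0|]|]; lra.
  rewrite ltr_pM2r ?invr_gt0 // ltr_pM2r //; lra.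
have hkey : forall i, i \in J -> (key i < Q)%N.
  move=> i hi; have /andP [h0 h1] := hw i hi.
  rewrite /key truncn_lt_nat //; apply: lt_trans h1 _; exact: truncnS_gt.
have hQ : Q%:R <= 2 * Nr / T + 1.
  rewrite /Q -natr1 lerD2r truncn_le; apply: divr_ge0; lra.
have hks := @keysum _ N Q J key hkey t.
pose c (p : 'I_N * 'I_N) : R :=
  ((p.1 \in J) && (p.2 \in J) && (key p.1 == key p.2) && (p.1 != p.2))%:R.
have hsc : \sum_(p : 'I_N * 'I_N) (((p.1 \in J) && (p.2 \in J) && (key p.1 == key p.2))%:R : R)
    <= \sum_p c p + #|J|%:R.
  have -> : (#|J|%:R : R) = \sum_(p : 'I_N * 'I_N) (((p.1 \in J) && (p.2 == p.1))%:R : R).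
    rewrite card_sum -(pair_bigA _ (fun i j => (((i \in J) && (j == i))%:R : R))) /=.
    apply: eq_bigr => i _; rewrite (bigD1 i) //= eqxx andbT big1 ?addr0 // => j hj.
    by rewrite (negbTE hj) andbF.
  rewrite -big_split /=; apply: ler_sum => p _; rewrite /c.
  case: (p.1 \in J); case: (p.2 \in J); case: (key p.1 == key p.2) => //=;
    rewrite ?add0r ?addr0 ?ler0n //.
  by rewrite eq_sym; case: (p.2 == p.1) => /=; rewrite ?add0r ?addr0.
pose L := [seq d <- sums G H | (0 <= d) && (d * Nr < T)].
pose kd (d : R) : nat := kf (d * Nr / eta).
have hpt : forall p, c p <= \sum_(d <- L)
    (ind x ((kd d)%:R * eta) p - ind x ((kd d)%:R * eta - eta) p).
  move=> p.
  have hnn : forall d, 0 <= ind x ((kd d)%:R * eta) p - ind x ((kd d)%:R * eta - eta) p.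
    move=> d; rewrite subr_ge0; apply: ind_mono; lra.
  rewrite /c; case hcp: (_ && _ && _ && _); last first.
    by rewrite /=; apply: sumr_ge0 => d _.
  move/andP: hcp => [/andP [/andP [hi hj] hk] hne].
  have hai := hJP _ hi; have hbj := hJP _ hj.
  have [ha0 _] := hP01 _ hai; have [hb0 _] := hP01 _ hbj.
  have [hdS hdT] := @close_pair _ P G hG huniq K Nr T H hK hNr hT hH _ _ hai hbj ha0 hb0 (eqP hk).
  set d0 := `|x p.1.+1 - x p.2.+1| in hdS hdT.
  have hd0L : d0 \in L by rewrite mem_filter normr_ge0 hdT hdS.
  rewrite (big_rem d0 hd0L) /=.
  suff h1 : 1 <= ind x ((kd d0)%:R*eta) p - ind x ((kd d0)%:R*eta - eta) p.
    have : 0 <= \sum_(y <- rem d0 L) (ind x ((kd y)%:R * eta) p - ind x ((kd y)%:R * eta - eta) p).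
      by apply: sumr_ge0 => d _.
    lra.
  have hdi : dist_int (x p.1.+1 - x p.2.+1) = d0.
    apply: dist_int_small; rewrite -/d0.
    have : d0 * Nr < 1/2 * Nr by lra.
    by rewrite ltr_pM2r // => h; exact: ltW h.
  have hv : 0 <= d0 * Nr / eta.
    by apply: divr_ge0; [apply: mulr_ge0; [exact: normr_ge0 | exact: ltW] | exact: ltW].
  have /andP [hk1 hk2] := kf_spec _ hv.
  rewrite /ind hne /= hdi.
  have -> : (d0 <= (kd d0)%:R * eta / Nr) = true.
    apply/idP; rewrite ler_pdivlMr //.
    by move: hk2; rewrite ler_pdivrMr.
  have -> : (d0 <= ((kd d0)%:R * eta - eta) / Nr) = false.
    apply/negbTE; rewrite -ltNge ltr_pdivrMr //.
    move: hk1; rewrite ltr_pdivlMr // => hk1.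
    have -> : (kd d0)%:R * eta - eta = ((kf (d0 * Nr / eta))%:R - 1) * eta by rewrite /kd; ring.
    exact: hk1.
  by rewrite subr0.
have hind : forall u, \sum_(p : 'I_N * 'I_N) ind x u p = pair_corr x u N * Nr.
  by move=> u; rewrite pair_corrE divfK // gt_eqF.
have hsum : \sum_p c p <= Nr / 2.
  apply: le_trans (ler_sum _ (fun p _ => hpt p)) _.
  rewrite exchange_big /=.
  apply: le_trans (@sum_seq_le _ L _ (Nr * beta) _) _.
    move=> d hd; rewrite sumrB !hind.
    move: hd; rewrite mem_filter => /andP [/andP [hd0 hdT] _].
    have hv : 0 <= d * Nr / eta.
      by apply: divr_ge0; [apply: mulr_ge0; [exact: hd0 | exact: ltW] | exact: ltW].
    have hkle : (kd d <= K0)%N.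
      apply: kf_le => //; apply: lt_trans hK0.
      by rewrite ltr_pM2r ?invr_gt0.
    have := hN1 N hNN1 (kd d) hkle.
    move=> hlt; rewrite -mulrBl mulrC ler_pM2l //; exact: ltW.

  have hsL : (size L <= C)%N.
    rewrite size_filter (leq_trans (count_size _ _)) // size_sums /C.
    by rewrite leq_exp2r.
  have : (size L)%:R <= C%:R :> R by rewrite ler_nat.
  move=> hsL'; apply: le_trans (ler_wpM2r _ hsL') _.
    by rewrite mulr_ge0 // ltW.
  rewrite /beta (_ : C%:R * (Nr * (C%:R * 2)^-1) = Nr / 2) //; field; rewrite gt_eqF //.

have e1 : (2 * t - 1) * gam = 4 + gam by rewrite /t; field; rewrite gt_eqF.
have m1 : (2 * t - 1) * (gam * Nr) <= (2 * t - 1) * #|J|%:R.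
  by rewrite ler_wpM2l //; lra.
have E1 : (2 * t - 1) * #|J|%:R = 2 * t * #|J|%:R - #|J|%:R by ring.
have E2 : (2 * t - 1) * (gam * Nr) = 4 * Nr + gam * Nr by rewrite mulrA e1; ring.
have q1 : t ^+ 2 * Q%:R <= 2 * Nr + T.
  have -> : 2 * Nr + T = t ^+ 2 * (2 * Nr / T + 1).
    by rewrite /T; field; rewrite gt_eqF //; lra.
  by rewrite ler_wpM2l // sqr_ge0.
have hgN : 0 < gam * Nr by rewrite mulr_gt0.
lra.
Qed.
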